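(* Define $\rho:M\times M\to[1,\infty)$ by $$\rho\big((y,x),(y',x')\big)=1+|y-y'|+2\inf\Big\{t\ge0:\ \sum_{i=1}^de^{-2\lambda_i(t+\max(y,y'))}(x_i-x_i')^2\le1\Big\}.$$ Then there exists $C_\rho>0$ such that $\mathrm{dist}(p,q)\le\rho(p,q)\le\mathrm{dist}(p,q)+C_\rho$ for all $p,q\in M$.
   Context: Let $d\ge1$, $0<\lambda_1\le\cdots\le\lambda_d$, and $M$ be $\mathbb{R}^{d+1}$ with coordinates $(y,x)=(y,x_1,\dots,x_d)$ and metric $g=dy^2+\sum_{i=1}^d e^{-2\lambda_i y}dx_i^2$; $\mathrm{dist}$ is its Riemannian distance. *)

(* Defs.v *)
From Stdlib Require Import Reals.
From Coquelicot Require Import Coquelicot.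
Open Scope R_scope.

Fixpoint sum_upto (d : nat) (f : nat -> R) : R :=
  match d with
  | O => 0
  | S n => sum_upto n f + f n
  end.

(* A point of M = R^{d+1}: (y, x) with x_i := x (i-1) for i = 1..d
   (coordinates x k with k >= d are irrelevant). *)
Definition Pt : Type := (R * (nat -> R))%type.

Definition C1 (f : R -> R) : Prop :=
  forall t, ex_derive f t /\ continuous (Derive f) t.

(* Speed of the curve (cy, cx) w.r.t. g = dy^2 + sum_i e^{-2 lambda_i y} dx_i^2 *)
Definition speed (d : nat) (lam : nat -> R) (cy : R -> R) (cx : nat -> R -> R)
  (t : R) : R :=
  sqrt (Derive cy t ^ 2 +
        sum_upto d (fun i => exp (-2 * lam i * cy t) * Derive (cx i) t ^ 2)).

Definition curve_length (d : nat) (lam : nat -> R) (cy : R -> R)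
  (cx : nat -> R -> R) : R :=
  RInt (speed d lam cy cx) 0 1.

(* C^1 curves t in [0,1] |-> (cy t, cx t) from p to q (defined and C^1 on all
   of R; every C^1 curve on [0,1] extends to such a one). *)
Definition admissible_curve (d : nat) (p q : Pt) (cy : R -> R)
  (cx : nat -> R -> R) : Prop :=
  C1 cy /\ (forall i, (i < d)%nat -> C1 (cx i)) /\
  cy 0 = fst p /\ cy 1 = fst q /\
  (forall i, (i < d)%nat -> cx i 0 = snd p i /\ cx i 1 = snd q i).

Definition rdist (d : nat) (lam : nat -> R) (p q : Pt) : R :=
  real (Glb_Rbar (fun L => exists cy cx,
          admissible_curve d p q cy cx /\ L = curve_length d lam cy cx)).

Definition rho (d : nat) (lam : nat -> R) (p q : Pt) : R :=
  1 + Rabs (fst p - fst q) +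
  2 * real (Glb_Rbar (fun t => 0 <= t /\
        sum_upto d (fun i => exp (-2 * lam i * (t + Rmax (fst p) (fst q))) *
                              (snd p i - snd q i) ^ 2) <= 1)).

(* Main.v *)
Require Import Defs.
From Stdlib Require Import Reals Lra Lia Psatz Classical.
From Coquelicot Require Import Coquelicot.
Open Scope R_scope.


Lemma cplus (f g : R -> R) (x : R) : continuous f x -> continuous g x -> continuous (fun t => f t + g t) x.
Proof. intros H1 H2. exact (continuous_plus f g x H1 H2). Qed.
Lemma cmult (f g : R -> R) (x : R) : continuous f x -> continuous g x -> continuous (fun t => f t * g t) x.
Proof. intros H1 H2. exact (continuous_mult f g x H1 H2). Qed.
Lemma cconst (c x : R) : continuous (fun _ => c) x.
Proof. apply continuous_const. Qed.
Lemma cid (x : R) : continuous (fun t => t) x.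
Proof. apply continuous_id. Qed.

Lemma sum_nonneg n f : (forall i, (i < n)%nat -> 0 <= f i) -> 0 <= sum_upto n f.
Proof. induction n; simpl; intros H. lra. assert (0 <= f n) by (apply H; lia).
  assert (0 <= sum_upto n f) by (apply IHn; intros; apply H; lia). lra. Qed.
Lemma sum_ge_term n f i : (forall i, (i < n)%nat -> 0 <= f i) -> (i < n)%nat -> f i <= sum_upto n f.
Proof. induction n; simpl; intros H Hi. lia.
  destruct (Nat.eq_dec i n) as [->|Hne].
  - assert (0 <= sum_upto n f) by (apply sum_nonneg; intros; apply H; lia). lra.
  - assert (f i <= sum_upto n f) by (apply IHn; [intros; apply H; lia| lia]).
    assert (0 <= f n) by (apply H; lia). lra. Qed.
Lemma sum_le n f g : (forall i, (i < n)%nat -> f i <= g i) -> sum_upto n f <= sum_upto n g.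
Proof. induction n; simpl; intros H. lra. assert (f n <= g n) by (apply H; lia).
  assert (sum_upto n f <= sum_upto n g) by (apply IHn; intros; apply H; lia). lra. Qed.
Lemma sum_ext n f g : (forall i, (i < n)%nat -> f i = g i) -> sum_upto n f = sum_upto n g.
Proof. induction n; simpl; intros H. lra. rewrite (H n) by lia. rewrite IHn by (intros; apply H; lia). lra. Qed.
Lemma sum_const n c : sum_upto n (fun _ => c) = INR n * c.
Proof. induction n; simpl sum_upto. simpl; ring. rewrite IHn, S_INR. ring. Qed.
Lemma sum_scale n c f : sum_upto n (fun i => c * f i) = c * sum_upto n f.
Proof. induction n; simpl. ring. rewrite IHn. ring. Qed.
Lemma sum_cont n (f : nat -> R -> R) x : (forall i, (i < n)%nat -> continuous (f i) x) ->
  continuous (fun t => sum_upto n (fun i => f i t)) x.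
Proof. induction n; simpl; intros H. apply cconst. apply cplus. apply IHn; intros; apply H; lia. apply H; lia. Qed.
Lemma sum_le_one n f : (1 <= n)%nat -> (forall i, (i < n)%nat -> f i <= / INR n) -> sum_upto n f <= 1.
Proof. intros Hn H. eapply Rle_trans. apply (sum_le n f (fun _ => / INR n)). exact H.
  rewrite sum_const. assert (0 < INR n) by (apply lt_0_INR; lia). right; field; lra. Qed.

Lemma glb_fin (E : R -> Prop) x0 : (forall x, E x -> 0 <= x) -> E x0 ->
  Glb_Rbar E = Finite (real (Glb_Rbar E)) /\ 0 <= real (Glb_Rbar E).
Proof. intros H0 Hx. destruct (Glb_Rbar_correct E) as [Hlb Hg].
  assert (A : Rbar_le (Glb_Rbar E) x0) by (apply Hlb; auto).
  assert (B : Rbar_le 0 (Glb_Rbar E)) by (apply Hg; intros x Ex; simpl; apply H0; auto).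
  destruct (Glb_Rbar E); simpl in *; try contradiction. split; auto. Qed.
Lemma glb_le (E : R -> Prop) x0 : (forall x, E x -> 0 <= x) -> E x0 -> real (Glb_Rbar E) <= x0.
Proof. intros H0 Hx. destruct (glb_fin E x0 H0 Hx) as [Hf _].
  destruct (Glb_Rbar_correct E) as [Hlb _]. assert (A := Hlb x0 Hx). rewrite Hf in A. exact A. Qed.
Lemma glb_ge (E : R -> Prop) x0 b : (forall x, E x -> 0 <= x) -> E x0 -> (forall x, E x -> b <= x) -> b <= real (Glb_Rbar E).
Proof. intros H0 Hx Hb. destruct (glb_fin E x0 H0 Hx) as [Hf _].
  destruct (Glb_Rbar_correct E) as [_ Hg]. assert (A : Rbar_le b (Glb_Rbar E)) by (apply Hg; intros x Ex; apply Hb; auto).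
  rewrite Hf in A. exact A. Qed.
Lemma glb_approx (E : R -> Prop) x0 eps : (forall x, E x -> 0 <= x) -> E x0 -> 0 < eps ->
  exists x, E x /\ x < real (Glb_Rbar E) + eps.
Proof. intros H0 Hx He. apply NNPP; intros Hn.
  assert (real (Glb_Rbar E) + eps <= real (Glb_Rbar E)). { apply (glb_ge E x0); auto.
    intros x Ex. apply Rnot_lt_le. intros Hl. apply Hn. exists x; auto. } lra. Qed.
Lemma cder (f : R -> R) (x : R) : ex_derive f x -> continuous f x.
Proof. apply (ex_derive_continuous (K:=R_AbsRing) (V:=R_NormedModule)). Qed.
Lemma exp_mono x y : x <= y -> exp x <= exp y.
Proof. intros [H|H]. left; apply exp_increasing; auto. subst; lra. Qed.


Definition gg (s : R) : R := 3 * (s * (1 - s) + Rabs (s * (1 - s))).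
Definition st (s : R) : R := RInt gg 0 s.

Lemma gg_cont x : continuous gg x.
Proof. unfold gg. apply cmult. apply cconst. apply cplus.
  apply cder; auto_derive; auto.
  apply continuous_Rabs_comp. apply cder; auto_derive; auto. Qed.
Lemma gg_ge0 s : 0 <= gg s.
Proof. unfold gg. assert (- (s*(1-s)) <= Rabs (s*(1-s))) by (rewrite <- Rabs_Ropp; apply Rle_abs). lra. Qed.
Lemma gg_out s : s <= 0 \/ 1 <= s -> gg s = 0.
Proof. intros H. unfold gg. assert (s*(1-s) <= 0) by (destruct H; nra).
  rewrite Rabs_left1 by lra. ring. Qed.
Lemma gg_in s : 0 <= s <= 1 -> gg s = 6 * s - 6 * s ^ 2.
Proof. intros H. unfold gg. assert (0 <= s*(1-s)) by nra. rewrite Rabs_pos_eq by lra. ring. Qed.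
Lemma gg_pos s : 0 < gg s -> 0 < s < 1.
Proof. intros H. destruct (Rle_dec s 0). rewrite gg_out in H; lra.
  destruct (Rle_dec 1 s). rewrite gg_out in H; lra. lra. Qed.
Lemma gg_ex a b : ex_RInt gg a b.
Proof. apply (ex_RInt_continuous (V:=R_CompleteNormedModule)); intros; apply gg_cont. Qed.

Lemma st_deriv s : is_derive st s (gg s).
Proof. apply (is_derive_RInt gg st 0 s). apply filter_forall. intros b. unfold st. apply (RInt_correct (V:=R_CompleteNormedModule)), gg_ex.
  apply gg_cont. Qed.
Lemma st_neg s : s <= 0 -> st s = 0.
Proof. intros H. unfold st. rewrite (RInt_ext gg (fun _ => 0)). rewrite RInt_const. unfold scal; simpl; unfold mult; simpl; ring.
  intros x Hx. apply gg_out. rewrite Rmin_right in Hx by lra. rewrite Rmax_left in Hx by lra. lra. Qed.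
Lemma st_one : st 1 = 1.
Proof. unfold st. rewrite (RInt_ext gg (fun x => 6 * x - 6 * x ^ 2)).
  2:{ intros x Hx. apply gg_in. rewrite Rmin_left in Hx by lra. rewrite Rmax_right in Hx by lra. lra. }
  assert (H := is_RInt_derive (V:=R_CompleteNormedModule) (fun x => 3*x^2-2*x^3) (fun x => 6*x-6*x^2) 0 1).
  assert (H1 : forall x, Rmin 0 1 <= x <= Rmax 0 1 -> is_derive (fun x => 3*x^2-2*x^3) x (6*x-6*x^2)).
  { intros x _. auto_derive; auto. ring. }
  assert (H2 : forall x, Rmin 0 1 <= x <= Rmax 0 1 -> continuous (fun x => 6*x-6*x^2) x).
  { intros x _. apply cder; auto_derive; auto. }
  rewrite (is_RInt_unique _ _ _ _ (H H1 H2)). unfold minus, plus, opp; simpl; ring. Qed.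
Lemma st_big s : 1 <= s -> st s = 1.
Proof. intros H. unfold st. rewrite <- (RInt_Chasles gg 0 1 s) by apply gg_ex.
  fold (st 1). rewrite st_one. rewrite (RInt_ext gg (fun _ => 0) 1 s). rewrite RInt_const. unfold scal; simpl; unfold mult; simpl.
  unfold plus; simpl; ring.
  intros x Hx. apply gg_out. rewrite Rmin_left in Hx by lra. lra. Qed.


Lemma cpow2 (f : R -> R) x : continuous f x -> continuous (fun t => f t ^ 2) x.
Proof. intros H. apply (continuous_ext (fun t => f t * f t)). intros; simpl; ring. apply cmult; auto. Qed.

Lemma speed_cont d lam cy cx t : Defs.C1 cy -> (forall i, (i < d)%nat -> Defs.C1 (cx i)) ->
  continuous (speed d lam cy cx) t.
Proof. intros Hy Hx. unfold speed. apply continuous_sqrt_comp. apply cplus.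
  apply cpow2. apply Hy.
  apply (sum_cont d (fun i t => exp (-2 * lam i * cy t) * Derive (cx i) t ^ 2)).
  intros i Hi. apply cmult. apply continuous_exp_comp. apply cmult. apply cconst.
  apply cder, Hy. apply cpow2, Hx; auto. Qed.

Lemma speed_ex d lam cy cx a b : Defs.C1 cy -> (forall i, (i < d)%nat -> Defs.C1 (cx i)) ->
  ex_RInt (speed d lam cy cx) a b.
Proof. intros. apply (ex_RInt_continuous (V:=R_CompleteNormedModule)); intros; apply speed_cont; auto. Qed.

Lemma speed_ge0 d lam cy cx t : 0 <= speed d lam cy cx t.
Proof. apply sqrt_pos. Qed.

Lemma speed_ge_y d lam cy cx t : Rabs (Derive cy t) <= speed d lam cy cx t.
Proof. unfold speed. rewrite <- sqrt_Rsqr_abs. apply sqrt_le_1_alt.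
  assert (0 <= sum_upto d (fun i => exp (-2 * lam i * cy t) * Derive (cx i) t ^ 2)).
  { apply sum_nonneg. intros. apply Rmult_le_pos. left; apply exp_pos. apply pow2_ge_0. }
  unfold Rsqr. lra. Qed.

Lemma speed_ge_x d lam cy cx t i : (i < d)%nat ->
  Rabs (Derive (cx i) t) <= exp (lam i * cy t) * speed d lam cy cx t.
Proof. intros Hi. unfold speed.
  set (f := fun i => exp (-2 * lam i * cy t) * Derive (cx i) t ^ 2).
  assert (Hf : f i <= sum_upto d f).
  { apply sum_ge_term; auto. intros. apply Rmult_le_pos. left; apply exp_pos. apply pow2_ge_0. }
  assert (E : f i = (exp (- lam i * cy t) * Rabs (Derive (cx i) t)) ^ 2).
  { unfold f. rewrite Rpow_mult_distr. rewrite pow2_abs.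
    f_equal. simpl. rewrite Rmult_1_r, <- exp_plus. f_equal; ring. }
  assert (0 <= exp (- lam i * cy t) * Rabs (Derive (cx i) t)) by (apply Rmult_le_pos; [left; apply exp_pos| apply Rabs_pos]).
  assert (exp (- lam i * cy t) * Rabs (Derive (cx i) t) <= sqrt (Derive cy t ^ 2 + sum_upto d f)).
  { rewrite <- (sqrt_pow2 (exp (- lam i * cy t) * Rabs (Derive (cx i) t))) by auto.
    apply sqrt_le_1_alt. rewrite <- E. assert (0 <= Derive cy t ^ 2) by apply pow2_ge_0. lra. }
  assert (exp (lam i * cy t) * exp (- lam i * cy t) = 1) by (rewrite <- exp_plus, <- exp_0; f_equal; ring).
  assert (0 < exp (lam i * cy t)) by apply exp_pos.
  fold f. set (S := sqrt _) in *. set (D := Rabs _) in *. set (e1 := exp (lam i * cy t)) in *.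
  set (e2 := exp (- lam i * cy t)) in *.
  replace D with (e1 * (e2 * D)) by (rewrite <- Rmult_assoc, H1; ring).
  apply Rmult_le_compat_l; lra. Qed.


Lemma cont_ex (f : R -> R) a b : (forall x, continuous f x) -> ex_RInt f a b.
Proof. intros H. apply (ex_RInt_continuous (V:=R_CompleteNormedModule)); intros; apply H. Qed.

Lemma RInt_abs_le (f g : R -> R) a b : a <= b -> (forall x, continuous f x) -> (forall x, continuous g x) ->
  (forall x, a <= x <= b -> Rabs (f x) <= g x) -> Rabs (RInt f a b) <= RInt g a b.
Proof. intros Hab Hf Hg H. eapply Rle_trans. apply abs_RInt_le; auto. apply cont_ex; auto.
  apply RInt_le; auto. apply cont_ex. intros; apply continuous_Rabs_comp; auto. apply cont_ex; auto.
  intros; apply H; lra. Qed.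

Lemma C1_ftc f a b : Defs.C1 f -> RInt (Derive f) a b = f b - f a.
Proof. intros H. apply RInt_Derive; intros; apply H. Qed.
Lemma C1_dcont f x : Defs.C1 f -> continuous (Derive f) x.
Proof. intros H. apply H. Qed.

Lemma sigma_deriv (v : R -> R) t : (forall x, continuous v x) -> is_derive (fun t => RInt v 0 t) t (v t).
Proof. intros H. apply (is_derive_RInt v (fun t => RInt v 0 t) 0 t). apply filter_forall. intros b.
  apply (RInt_correct (V:=R_CompleteNormedModule)), cont_ex; auto. apply H. Qed.

Lemma chasles (v : R -> R) t : (forall x, continuous v x) -> RInt v 0 t + RInt v t 1 = RInt v 0 1.
Proof. intros H. rewrite <- (RInt_Chasles v 0 t 1) by (apply cont_ex; auto). reflexivity. Qed.

Section Curve.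
Variables (d : nat) (lam : nat -> R) (cy : R -> R) (cx : nat -> R -> R).
Hypothesis Hy : Defs.C1 cy.
Hypothesis Hx : forall i, (i < d)%nat -> Defs.C1 (cx i).
Let v := speed d lam cy cx.
Let L : R := RInt v 0 1.
Let sg : R -> R := fun t => RInt v 0 t.
Lemma vc x : continuous v x. Proof. apply speed_cont; auto. Qed.

Lemma L_ge0 : 0 <= L.
Proof. apply RInt_ge_0. lra. apply cont_ex, vc. intros; apply speed_ge0. Qed.

Lemma cy_b1 t : 0 <= t <= 1 -> Rabs (cy t - cy 0) <= sg t.
Proof. intros Ht. rewrite <- C1_ftc by auto. apply RInt_abs_le. lra. intros; apply Hy. apply vc.
  intros; apply speed_ge_y. Qed.
Lemma cy_b2 t : 0 <= t <= 1 -> Rabs (cy 1 - cy t) <= L - sg t.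
Proof. intros Ht. replace (L - sg t) with (RInt v t 1) by (generalize (chasles v t vc); unfold L, sg; intros Hc; lra).
  rewrite <- C1_ftc by auto. apply RInt_abs_le. lra. intros; apply Hy. apply vc.
  intros; apply speed_ge_y. Qed.

Lemma cx_bound i : (i < d)%nat -> 0 < lam i ->
  Rabs (cx i 1 - cx i 0) <= PI * exp (lam i * ((cy 0 + cy 1 + L) / 2)) / lam i.
Proof. intros Hi Hl. set (l := lam i) in *. set (E := exp (l * ((cy 0 + cy 1 + L) / 2))).
  set (m := (cy 1 - cy 0 + L) / 2). set (K := 2 * E / l).
  set (phi := fun s => K * atan (exp (l * (s - m)))).
  set (dphi := fun s => K * (l * exp (l * (s - m)) / (1 + exp (l * (s - m)) ^ 2))).
  assert (Hphi : forall s, is_derive phi s (dphi s)).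
  { intros s. unfold phi, dphi. auto_derive; auto. unfold Rminus. assert (0 < exp (l * (s + - m))) by apply exp_pos. simpl. field. nra. }
  assert (Hdphi : forall s, continuous dphi s).
  { intros s. apply cder. unfold dphi. auto_derive. repeat split; auto.
    assert (0 < exp (l * (s - m))) by apply exp_pos. nra. }
  set (F' := fun t => v t * dphi (sg t)).
  assert (HF : forall t, is_derive (fun t => phi (sg t)) t (F' t)).
  { intros t. unfold F'. apply (is_derive_comp phi sg t). apply Hphi. apply sigma_deriv, vc. }
  assert (HF'c : forall t, continuous F' t).
  { intros t. unfold F'. apply cmult. apply vc. apply (continuous_comp sg dphi). apply cder.
    eexists; apply sigma_deriv, vc. apply Hdphi. }
  assert (Hint : RInt F' 0 1 = phi (sg 1) - phi (sg 0)).
  { apply is_RInt_unique. apply (is_RInt_derive (V:=R_CompleteNormedModule) (fun t => phi (sg t)) F').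
    intros; apply HF. intros; apply HF'c. }
  rewrite <- C1_ftc by auto.
  eapply Rle_trans. apply (RInt_abs_le _ F'). lra. intros; apply Hx; auto. apply HF'c.
  - intros t Ht. eapply Rle_trans. apply (speed_ge_x d lam cy cx t i Hi). fold v. fold l. unfold F', dphi, K.
    set (u := l * (sg t - m)). assert (Hu : 0 < exp u) by apply exp_pos.
    assert (A1 : cy t <= cy 0 + sg t) by (generalize (cy_b1 t Ht); intros H; apply Rabs_le_between in H; lra).
    assert (A2 : cy t <= cy 1 + L - sg t) by (generalize (cy_b2 t Ht); intros H; apply Rabs_le_between in H; lra).
    assert (B1 : exp (l * cy t) <= E * exp u).
    { unfold E. rewrite <- exp_plus. apply exp_mono. unfold u, m.
      assert (0 <= l * (cy 0 + sg t - cy t)) by (apply Rmult_le_pos; lra). lra. }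
    assert (B2 : exp (l * cy t) * exp u <= E).
    { unfold E. rewrite <- exp_plus. apply exp_mono. unfold u, m.
      assert (0 <= l * (cy 1 + L - sg t - cy t)) by (apply Rmult_le_pos; lra). lra. }
    assert (B3 : exp (l * cy t) <= 2 * E * exp u / (1 + exp u ^ 2)).
    { apply (Rmult_le_reg_r (1 + exp u ^ 2)). nra. unfold Rdiv. rewrite Rmult_assoc, Rinv_l by nra. nra. }
    assert (0 <= v t) by apply speed_ge0.
    replace (v t * (2 * E / l * (l * exp u / (1 + exp u ^ 2)))) with (v t * (2 * E * exp u / (1 + exp u ^ 2)))
      by (field; split; nra).
    nra.
  - rewrite Hint. unfold phi, K.
    assert (H1 := atan_bound (exp (l * (sg 1 - m)))).
    assert (H2 : 0 <= atan (exp (l * (sg 0 - m)))).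
    { rewrite <- atan_0. left. apply atan_increasing, exp_pos. }
    assert (0 < E) by apply exp_pos.
    replace (PI * E / l) with (2 * E / l * (PI / 2)) by (field; lra).
    assert (0 < 2 * E / l) by (apply Rdiv_lt_0_compat; lra).
    nra.
Qed.
End Curve.


Lemma rmax_abs y y' : Rmax y y' = (y + y' + Rabs (y - y')) / 2.
Proof. unfold Rmax. destruct (Rle_dec y y').
  rewrite Rabs_left1 by lra. field. rewrite Rabs_pos_eq by lra. field. Qed.

Definition sstar (d : nat) (lam : nat -> R) : R := INR d * PI ^ 2 / (2 * lam O ^ 3).

Lemma term_bound d lam i H Dl : (1 <= d)%nat -> (i < d)%nat ->
  (forall i, (i < d)%nat -> 0 < lam i) ->
  (forall i j, (i <= j)%nat -> (j < d)%nat -> lam i <= lam j) ->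
  Rabs Dl <= PI * exp (lam i * H) / lam i ->
  exp (-2 * lam i * (H + sstar d lam)) * Dl ^ 2 <= / INR d.
Proof. intros hd Hi hpos hmono HD.
  assert (ha : 0 < lam O) by (apply hpos; lia).
  assert (hl : 0 < lam i) by auto.
  assert (hal : lam O <= lam i) by (apply hmono; lia).
  assert (hdp : 0 < INR d) by (apply lt_0_INR; lia).
  set (l := lam i) in *. set (a := lam O) in *. set (s := sstar d lam).
  assert (hs : 0 < s) by (unfold s, sstar; fold a; apply Rdiv_lt_0_compat; [apply Rmult_lt_0_compat; [lra| assert (PI > 0) by apply PI_RGT_0; nra] | assert (0 < a^3) by (apply pow_lt; lra); lra]).
  set (E := exp (l * H)). set (e := exp (2 * l * s)).
  set (X := exp (-2 * l * (H + s))).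
  assert (HX : X * E ^ 2 * e = 1).
  { unfold X, E, e. simpl. rewrite !Rmult_1_r, <- !exp_plus, <- exp_0. f_equal. ring. }
  assert (He : 2 * l * s < e) by (unfold e; assert (H1 := exp_ineq1 (2 * l * s)); assert (Hn0 : 2*l*s <> 0) by nra; specialize (H1 Hn0); lra).
  assert (Hsval : 2 * l * s * a ^ 3 = l * INR d * PI ^ 2).
  { unfold s, sstar. fold a. field. lra. }
  assert (Hpi : 0 < PI) by apply PI_RGT_0.
  assert (Hl3 : a ^ 3 <= l ^ 3) by (apply pow_incr; lra).
  assert (Hde : INR d * PI ^ 2 <= l ^ 2 * e).
  { assert (0 < a ^ 3) by (apply pow_lt; lra).
    assert (INR d * PI ^ 2 * a ^ 3 <= l ^ 2 * e * a ^ 3).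
    { assert (l ^ 2 * (2 * l * s) * a ^ 3 = l ^ 3 * INR d * PI ^ 2) by (replace (l ^ 2 * (2 * l * s) * a ^ 3) with (l ^ 2 * (2 * l * s * a ^ 3)) by ring; rewrite Hsval; ring).
      assert (0 <= INR d * PI ^ 2) by (apply Rmult_le_pos; nra).
      assert (l ^ 2 * (2 * l * s) <= l ^ 2 * e) by (apply Rmult_le_compat_l; nra).
      nra. }
    nra. }
  assert (HXp : 0 < X) by apply exp_pos.
  assert (HEp : 0 < E) by apply exp_pos.
  assert (Hep : 0 < e) by apply exp_pos.
  assert (HD2 : Dl ^ 2 <= (PI * E / l) ^ 2).
  { rewrite <- (pow2_abs Dl). apply pow_incr. split. apply Rabs_pos. exact HD. }
  assert (HXv : X * (PI * E / l) ^ 2 = PI ^ 2 / (l ^ 2 * e)).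
  { replace X with (/ (E ^ 2 * e)). field. repeat split; lra.
    apply (Rmult_eq_reg_r (E ^ 2 * e)). rewrite Rinv_l. rewrite <- HX. ring. nra. nra. }
  assert (X * Dl ^ 2 <= PI ^ 2 / (l ^ 2 * e)) by (rewrite <- HXv; apply Rmult_le_compat_l; lra).
  eapply Rle_trans. eassumption.
  apply (Rmult_le_reg_r (l ^ 2 * e * INR d)). apply Rmult_lt_0_compat; [apply Rmult_lt_0_compat; [apply pow_lt; lra | lra] | lra].
  replace (PI ^ 2 / (l ^ 2 * e) * (l ^ 2 * e * INR d)) with (INR d * PI ^ 2) by (field; split; lra).
  replace (/ INR d * (l ^ 2 * e * INR d)) with (l ^ 2 * e) by (field; lra). exact Hde. Qed.

Lemma part2 d lam p q cy cx : (1 <= d)%nat ->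
  (forall i, (i < d)%nat -> 0 < lam i) ->
  (forall i j, (i <= j)%nat -> (j < d)%nat -> lam i <= lam j) ->
  admissible_curve d p q cy cx ->
  0 <= curve_length d lam cy cx /\
  Rabs (fst p - fst q) <= curve_length d lam cy cx /\
  (0 <= (curve_length d lam cy cx - Rabs (fst p - fst q)) / 2 + sstar d lam /\
   sum_upto d (fun i => exp (-2 * lam i * (((curve_length d lam cy cx - Rabs (fst p - fst q)) / 2 + sstar d lam)
      + Rmax (fst p) (fst q))) * (snd p i - snd q i) ^ 2) <= 1).
Proof. intros hd hpos hmono [Hy [Hx [H0 [H1 Hxi]]]].
  unfold curve_length. set (L := RInt (speed d lam cy cx) 0 1).
  assert (HL : 0 <= L) by (apply L_ge0; auto).
  assert (HyL : Rabs (fst p - fst q) <= L).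
  { rewrite Rabs_minus_sym, <- H0, <- H1. apply (cy_b1 d lam cy cx Hy Hx 1). lra. }
  assert (ha : 0 < lam O) by (apply hpos; lia).
  assert (hs : 0 < sstar d lam).
  { unfold sstar. assert (0 < INR d) by (apply lt_0_INR; lia). assert (PI > 0) by apply PI_RGT_0.
    apply Rdiv_lt_0_compat. apply Rmult_lt_0_compat; [lra|nra]. assert (0 < lam O ^ 3) by (apply pow_lt; lra). lra. }
  split; [|split; [|split]]; auto. lra.
  apply sum_le_one; auto. intros i Hi.
  replace ((L - Rabs (fst p - fst q)) / 2 + sstar d lam + Rmax (fst p) (fst q))
    with ((fst p + fst q + L) / 2 + sstar d lam) by (rewrite rmax_abs; field).
  apply term_bound; auto.
  rewrite <- H0, <- H1. destruct (Hxi i Hi) as [E0 E1]. rewrite <- E0, <- E1, Rabs_minus_sym.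
  apply (cx_bound d lam cy cx Hy Hx i Hi (hpos i Hi)). Qed.


Lemma Dst x : Derive st x = gg x.
Proof. apply is_derive_unique, st_deriv. Qed.
Lemma ex_st x : ex_derive st x.
Proof. eexists; apply st_deriv. Qed.

Lemma ggl_cont c t : continuous (fun t => gg (3 * t - c)) t.
Proof. apply (continuous_comp (fun t => 3 * t - c) gg). apply cder; auto_derive; auto. apply gg_cont. Qed.

Definition cyc (y y' Y : R) (t : R) : R := y + (Y - y) * st (3 * t - 0) + (y' - Y) * st (3 * t - 2).
Definition cyd (y y' Y : R) (t : R) : R := (Y - y) * (3 * gg (3 * t - 0)) + (y' - Y) * (3 * gg (3 * t - 2)).
Definition cxc (a b : R) (t : R) : R := a + (b - a) * st (3 * t - 1).
Definition cxd (a b : R) (t : R) : R := (b - a) * (3 * gg (3 * t - 1)).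

Lemma cyc_der y y' Y t : is_derive (cyc y y' Y) t (cyd y y' Y t).
Proof. unfold cyc, cyd. auto_derive. repeat split; apply ex_st. rewrite !Dst. unfold Rminus. ring. Qed.
Lemma cxc_der a b t : is_derive (cxc a b) t (cxd a b t).
Proof. unfold cxc, cxd. auto_derive. apply ex_st. rewrite !Dst. unfold Rminus. ring. Qed.

Lemma cyc_C1 y y' Y : Defs.C1 (cyc y y' Y).
Proof. intros t. split. eexists; apply cyc_der.
  apply (continuous_ext (cyd y y' Y)). intros x; symmetry; apply is_derive_unique, cyc_der.
  unfold cyd. apply cplus; apply cmult; try apply cconst; apply cmult; try apply cconst; apply ggl_cont. Qed.
Lemma cxc_C1 a b : Defs.C1 (cxc a b).
Proof. intros t. split. eexists; apply cxc_der.
  apply (continuous_ext (cxd a b)). intros x; symmetry; apply is_derive_unique, cxc_der.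
  unfold cxd. apply cmult; try apply cconst; apply cmult; try apply cconst; apply ggl_cont. Qed.

Definition ccy (p q : Pt) (Y : R) := cyc (fst p) (fst q) Y.
Definition ccx (p q : Pt) := fun i => cxc (snd p i) (snd q i).

Lemma cc_adm d p q Y : admissible_curve d p q (ccy p q Y) (ccx p q).
Proof. unfold admissible_curve, ccy, ccx. split; [apply cyc_C1|]. split; [intros; apply cxc_C1|].
  unfold cyc, cxc.
  rewrite (st_neg (3*0-0)), (st_neg (3*0-2)), (st_big (3*1-0)), (st_big (3*1-2)) by lra.
  split; [ring|]. split; [ring|]. intros i _.
  rewrite (st_neg (3*0-1)), (st_big (3*1-1)) by lra. split; ring. Qed.

Lemma sqrt_sum_le a b : sqrt (a ^ 2 + b ^ 2) <= Rabs a + Rabs b.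
Proof. rewrite <- (sqrt_pow2 (Rabs a + Rabs b)) by (generalize (Rabs_pos a) (Rabs_pos b); lra).
  apply sqrt_le_1_alt. rewrite <- (pow2_abs a), <- (pow2_abs b).
  generalize (Rabs_pos a) (Rabs_pos b); intros; nra. Qed.

Definition hh (y y' Y : R) (t : R) : R :=
  (Y - y) * (3 * gg (3 * t - 0)) + (Y - y') * (3 * gg (3 * t - 2)) + 3 * gg (3 * t - 1).
Definition HH (y y' Y : R) (t : R) : R :=
  (Y - y) * st (3 * t - 0) + (Y - y') * st (3 * t - 2) + st (3 * t - 1).

Lemma hh_cont y y' Y t : continuous (hh y y' Y) t.
Proof. unfold hh. apply cplus. apply cplus.
  apply cmult. apply cconst. apply cmult. apply cconst. apply ggl_cont.
  apply cmult. apply cconst. apply cmult. apply cconst. apply ggl_cont.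
  apply cmult. apply cconst. apply ggl_cont. Qed.

Lemma HH_int y y' Y : RInt (hh y y' Y) 0 1 = (Y - y) + (Y - y') + 1.
Proof. apply is_RInt_unique.
  assert (H := is_RInt_derive (V:=R_CompleteNormedModule) (HH y y' Y) (hh y y' Y) 0 1).
  assert (H1 : forall x, Rmin 0 1 <= x <= Rmax 0 1 -> is_derive (HH y y' Y) x (hh y y' Y x)).
  { intros x _. unfold HH, hh. auto_derive. repeat split; apply ex_st. rewrite !Dst. unfold Rminus. ring. }
  assert (H2 : forall x, Rmin 0 1 <= x <= Rmax 0 1 -> continuous (hh y y' Y) x).
  { intros; apply hh_cont. }
  specialize (H H1 H2). unfold HH in H.
  rewrite (st_neg (3*0-0)), (st_neg (3*0-2)), (st_neg (3*0-1)), (st_big (3*1-0)), (st_big (3*1-2)), (st_big (3*1-1)) in H by lra.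
  replace ((Y - y) + (Y - y') + 1) with (minus ((Y - y) * 1 + (Y - y') * 1 + 1) ((Y - y) * 0 + (Y - y') * 0 + 0)).
  exact H. unfold minus, plus, opp; simpl; ring. Qed.

Lemma cc_length d lam p q Y : fst p <= Y -> fst q <= Y ->
  sum_upto d (fun i => exp (-2 * lam i * Y) * (snd p i - snd q i) ^ 2) <= 1 ->
  curve_length d lam (ccy p q Y) (ccx p q) <= (Y - fst p) + (Y - fst q) + 1.
Proof. intros Hp Hq HS. unfold curve_length. rewrite <- HH_int.
  apply RInt_le. lra. apply (speed_ex d). apply cyc_C1. intros; apply cxc_C1.
  apply (ex_RInt_continuous (V:=R_CompleteNormedModule)); intros; apply hh_cont.
  intros t _. unfold speed, ccy, ccx.
  rewrite (is_derive_unique _ _ _ (cyc_der _ _ _ t)).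
  rewrite (sum_ext d _ (fun i => exp (-2 * lam i * cyc (fst p) (fst q) Y t) * cxd (snd p i) (snd q i) t ^ 2))
    by (intros i _; rewrite (is_derive_unique _ _ _ (cxc_der _ _ t)); reflexivity).
  set (g1 := gg (3 * t - 1)).
  assert (HS2 : sum_upto d (fun i => exp (-2 * lam i * cyc (fst p) (fst q) Y t) * cxd (snd p i) (snd q i) t ^ 2) <= (3 * g1) ^ 2).
  { destruct (Rle_lt_or_eq_dec 0 g1 (gg_ge0 _)) as [Hg|Hg].
    - assert (Ht := gg_pos _ Hg).
      assert (Ecy : cyc (fst p) (fst q) Y t = Y).
      { unfold cyc. rewrite (st_big (3*t-0)), (st_neg (3*t-2)) by lra. ring. }
      rewrite Ecy.
      rewrite (sum_ext d _ (fun i => (3 * g1) ^ 2 * (exp (-2 * lam i * Y) * (snd p i - snd q i) ^ 2)))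
        by (intros i _; unfold cxd; fold g1; ring).
      rewrite sum_scale. assert (0 <= (3 * g1) ^ 2) by apply pow2_ge_0. nra.
    - rewrite (sum_ext d _ (fun _ => 0)) by (intros i _; unfold cxd; fold g1; rewrite <- Hg; ring).
      rewrite sum_const. rewrite <- Hg. lra. }
  eapply Rle_trans. apply sqrt_le_1_alt. apply Rplus_le_compat_l. exact HS2.
  eapply Rle_trans. apply sqrt_sum_le.
  assert (Hg1 : 0 <= g1) by apply gg_ge0. rewrite (Rabs_pos_eq (3 * g1)) by lra.
  unfold hh, cyd. fold g1.
  assert (0 <= gg (3 * t - 0)) by apply gg_ge0. assert (0 <= gg (3 * t - 2)) by apply gg_ge0.
  apply Rplus_le_compat_r. apply Rabs_le. split; nra. Qed.


Theorem mainTheorem8 (d : nat) (lam : nat -> R)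
  (hd : (1 <= d)%nat)
  (hpos : forall i, (i < d)%nat -> 0 < lam i)
  (hmono : forall i j, (i <= j)%nat -> (j < d)%nat -> lam i <= lam j) :
  exists C : R, 0 < C /\
    forall p q : Pt, rdist d lam p q <= rho d lam p q /\
                     rho d lam p q <= rdist d lam p q + C.
Proof.
  assert (hs : 0 < sstar d lam).
  { unfold sstar. assert (0 < INR d) by (apply lt_0_INR; lia). assert (PI > 0) by apply PI_RGT_0.
    assert (0 < lam O) by (apply hpos; lia).
    apply Rdiv_lt_0_compat. apply Rmult_lt_0_compat; [lra|nra]. assert (0 < lam O ^ 3) by (apply pow_lt; lra). lra. }
  exists (1 + 2 * sstar d lam). split. lra. intros p q.
  unfold rdist, rho.
  set (Lset := fun L => exists cy cx, admissible_curve d p q cy cx /\ L = curve_length d lam cy cx).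
  set (Rset := fun t => 0 <= t /\ sum_upto d (fun i => exp (-2 * lam i * (t + Rmax (fst p) (fst q))) *
                              (snd p i - snd q i) ^ 2) <= 1).
  assert (Lnn : forall L, Lset L -> 0 <= L).
  { intros L [cy [cx [Ha ->]]]. apply (part2 d lam p q cy cx hd hpos hmono Ha). }
  assert (Rnn : forall t, Rset t -> 0 <= t) by (intros t [H _]; exact H).
  assert (Ha0 := cc_adm d p q (Rmax (fst p) (fst q))).
  set (L0 := curve_length d lam (ccy p q (Rmax (fst p) (fst q))) (ccx p q)).
  assert (HL0 : Lset L0) by (exists (ccy p q (Rmax (fst p) (fst q))), (ccx p q); split; auto).
  destruct (part2 d lam p q _ _ hd hpos hmono Ha0) as [_ [_ HT0]].
  assert (HR0 : Rset ((L0 - Rabs (fst p - fst q)) / 2 + sstar d lam)) by exact HT0.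
  set (ell := real (Glb_Rbar Lset)). set (g := real (Glb_Rbar Rset)).
  split.
  - apply Rnot_lt_le. intros Hlt.
    set (eps := (ell - (1 + Rabs (fst p - fst q) + 2 * g)) / 4).
    assert (He : 0 < eps) by (unfold eps; lra).
    destruct (glb_approx Rset _ eps Rnn HR0 He) as [t [Ht Htl]]. fold g in Htl.
    destruct Ht as [Ht0 HtS].
    set (Y := t + Rmax (fst p) (fst q)).
    assert (Lset (curve_length d lam (ccy p q Y) (ccx p q))).
    { exists (ccy p q Y), (ccx p q). split; auto. apply cc_adm. }
    assert (ell <= curve_length d lam (ccy p q Y) (ccx p q)) by (apply glb_le; auto).
    assert (curve_length d lam (ccy p q Y) (ccx p q) <= (Y - fst p) + (Y - fst q) + 1).
    { apply cc_length. unfold Y. generalize (Rmax_l (fst p) (fst q)); lra.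
      unfold Y. generalize (Rmax_r (fst p) (fst q)); lra. exact HtS. }
    unfold Y, eps in *. rewrite rmax_abs in *. lra.
  - assert (ell >= 1 + Rabs (fst p - fst q) + 2 * g - (1 + 2 * sstar d lam)); [|lra].
    apply Rle_ge. apply (glb_ge Lset L0); auto.
    intros L [cy [cx [Ha ->]]].
    destruct (part2 d lam p q cy cx hd hpos hmono Ha) as [_ [Hy [HT1 HT2]]].
    assert (g <= (curve_length d lam cy cx - Rabs (fst p - fst q)) / 2 + sstar d lam).
    { apply (glb_le Rset); auto. split; auto. }
    lra.
Qed.
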